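(* For any graph function $\alpha$ on a strongly connected digraph $G$ with $n$ vertices, we have $h\le(n-1)\sum_v\rho^R_v$, where $h=\max_v y_v-\min_v y_v$.
   Context: $G$ is a strongly connected directed graph on vertex set $\{1,\dots,n\}$ (self-loops allowed); a graph function assigns a real weight $\alpha_{uv}$ to each edge. $\alpha_v^{\text{in}}=\max_{u:(u,v)\in G}\alpha_{uv}$, $\alpha_v^{\text{out}}=\max_{w:(v,w)\in G}\alpha_{vw}$, $\rho^R_v=\max\{0,\alpha_v^{\text{out}}-\alpha_v^{\text{in}}\}$. A raising operation at $v$: if $\rho^R_v>0$ add $\rho^R_v/2$ to each incoming edge weight $\alpha_{uv}$ ($u\ne v$) and subtract it from each outgoing $\alpha_{vw}$ ($w\neq v$); otherwise do nothing. Starting from $\alpha$, for any infinite sequence of raising operations in which every vertex occurs infinitely often, the cumulative amount $r_v(t)$ by which each vertex has been raised (sum of the increments $\rho^R_v/2$ over operations at $v$) converges to a limit vector $r^*$ that does not depend on the sequence. The heights are $y_v=-r^*_v$. *)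

(* Defs.v *)
From HB Require Import structures.
From mathcomp Require Import all_boot all_order all_algebra.
From mathcomp Require Import all_classical all_reals all_analysis.
Set Implicit Arguments. Unset Strict Implicit. Unset Printing Implicit Defensive.
Import Order.TTheory GRing.Theory Num.Theory.
Local Open Scope ring_scope.

Section GraphFun.
Variables (R : realType) (n : nat).
Implicit Types (G : rel 'I_n) (alpha : 'I_n -> 'I_n -> R).

Definition strongly_connected G := forall u v : 'I_n, connect G u v.

(* alpha_v^in = max over in-edges (u,v); the default alpha u0 v is itself an
   in-edge weight when an in-edge exists (max is idempotent), so it does not
   affect the value. *)
Definition alpha_in G alpha (v : 'I_n) : R :=
  \big[Num.max/alpha (odflt v [pick u | G u v]) v]_(u | G u v) alpha u v.

Definition alpha_out G alpha (v : 'I_n) : R :=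
  \big[Num.max/alpha v (odflt v [pick w | G v w])]_(w | G v w) alpha v w.

Definition rhoR G alpha (v : 'I_n) : R :=
  Num.max 0 (alpha_out G alpha v - alpha_in G alpha v).

Definition raise G (v : 'I_n) alpha : 'I_n -> 'I_n -> R :=
  let d := rhoR G alpha v / 2 in
  fun a b =>
    if G a b && (b == v) && (a != v) then alpha a b + d
    else if G a b && (a == v) && (b != v) then alpha a b - d
    else alpha a b.

Fixpoint state G (s : nat -> 'I_n) alpha (t : nat) : 'I_n -> 'I_n -> R :=
  match t with
  | 0 => alpha
  | t'.+1 => raise G (s t') (state G s alpha t')
  end.

Definition raised G (s : nat -> 'I_n) alpha (v : 'I_n) (t : nat) : R :=
  \sum_(k < t | s k == v) rhoR G (state G s alpha k) v / 2.

Definition fair (s : nat -> 'I_n) := forall (v : 'I_n) (N : nat),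
  exists k, (N <= k)%N /\ s k = v.

(* max and min of a real function on a finite type (0 on the empty type) *)
Definition fmax (T : finType) (f : T -> R) : R :=
  if [pick x : T] is Some x0 then \big[Num.max/f x0]_x f x else 0.
Definition fmin (T : finType) (f : T -> R) : R :=
  if [pick x : T] is Some x0 then \big[Num.min/f x0]_x f x else 0.

End GraphFun.

(* Main.v *)
Require Import Defs.
From HB Require Import structures.
From mathcomp Require Import all_boot all_order all_algebra.
From mathcomp Require Import all_classical all_reals all_analysis.
From mathcomp Require Import lra zify.
Import Order.TTheory GRing.Theory Num.Theory numFieldNormedType.Exports.
Local Open Scope ring_scope.

Section Gen.
Variable R : realType.

Lemma big_att (T : finType) (P : pred T) (F : T -> R) (op : R -> R -> R) x0 :
  (forall a b, op a b = a \/ op a b = b) ->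
  (exists2 j, P j & x0 = F j) ->
  exists2 j, P j & \big[op/x0]_(i | P i) F i = F j.
Proof.
move=> hop hx0; apply: (big_ind (fun x => exists2 j, P j & x = F j)) => //.
- move=> x y [j Pj ->] [k Pk ->]; case: (hop (F j) (F k)) => ->.
  + by exists j.
  + by exists k.
- by move=> i Pi; exists i.
Qed.

Lemma max_or (a b : R) : Num.max a b = a \/ Num.max a b = b.
Proof. by case: (leP a b) => _; [right|left]. Qed.

Lemma min_or (a b : R) : Num.min a b = a \/ Num.min a b = b.
Proof. by case: (leP a b) => _; [left|right]. Qed.

Lemma exists_argmax (T : finType) (P : pred T) (f : T -> R) :
  (exists x, P x) -> exists2 x, P x & forall y, P y -> f y <= f x.
Proof.
move=> [x0 Px0].
have [j Pj E] := @big_att T P f Num.max (f x0) max_or (ex_intro2 _ _ x0 Px0 erefl).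
by exists j => // y Py; rewrite -E; apply: le_bigmax_cond.
Qed.

Lemma exists_argmin (T : finType) (P : pred T) (f : T -> R) :
  (exists x, P x) -> exists2 x, P x & forall y, P y -> f x <= f y.
Proof.
move=> ex; have [x Px H] := @exists_argmax _ P (fun y => - f y) ex.
by exists x => // y Py; have := H y Py; rewrite lerN2.
Qed.

Lemma exists_pos_below (T : finType) (P : pred T) (f : T -> R) :
  (forall x, P x -> 0 < f x) -> exists2 e, 0 < e & forall x, P x -> e <= f x.
Proof.
move=> H; exists (\big[Num.min/1]_(x | P x) f x).
  apply: (big_ind (fun x => 0 < x)) => //.
  by move=> x y x0 y0; rewrite lt_min x0 y0.
by move=> x Px; apply: bigmin_le_cond.
Qed.

Lemma cover (T : finType) (A : {set T}) (a b : T -> R) (L H : R) :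
  (forall th, L <= th -> th < L + H -> exists2 y, y \in A & a y <= th < b y) ->
  H <= \sum_(y in A) Num.max 0 (b y - a y).
Proof.
move Hk: #|A| => k; elim: k A L H Hk => [|k IH] A L H Hk Hc.
  have [H0|H0] := leP H 0.
    by apply: (le_trans H0); apply: sumr_ge0 => y _; rewrite le_max lexx.
  have [y yA _] := Hc L (lexx L) ltac:(lra).
  by move/eqP: Hk; rewrite cards_eq0 => /eqP A0; rewrite A0 inE in yA.
have [H0|H0] := leP H 0.
  by apply: (le_trans H0); apply: sumr_ge0 => y _; rewrite le_max lexx.
have [y0 y0A /andP[ay0 by0]] := Hc L (lexx L) ltac:(lra).
rewrite (big_setD1 y0 y0A) /=.
have Hk' : #|A :\ y0| = k by move: Hk; rewrite (cardsD1 y0 A) y0A add1n => -[].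
have := IH (A :\ y0) (b y0) (L + H - b y0) Hk'.
have hm : b y0 - a y0 <= Num.max 0 (b y0 - a y0) by rewrite le_max lexx orbT.
move=> h; suff: L + H - b y0 <= \sum_(i in A :\ y0) Num.max 0 (b i - a i) by lra.
apply: h => th h1 h2.
have [y yA /andP[ay by_]] := Hc th ltac:(lra) ltac:(lra).
exists y; last by rewrite ay by_.
rewrite in_setD1 yA andbT; apply/eqP => E; subst y; clear -h1 by_; lra.
Qed.
End Gen.
Section Main.
Variables (R : realType) (n : nat) (G : rel 'I_n) (alpha : 'I_n -> 'I_n -> R).
Hypothesis Hin : forall v, exists u, G u v.
Hypothesis Hout : forall v, exists w, G v w.

Lemma in_att (w : 'I_n -> 'I_n -> R) v :
  exists2 u, G u v & alpha_in G w v = w u v.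
Proof.
rewrite /alpha_in; apply: big_att; first exact: max_or.
case: pickP => [j Hj|H]; first by exists j.
by have [u Hu] := Hin v; move: (H u); rewrite Hu.
Qed.

Lemma out_att (w : 'I_n -> 'I_n -> R) v :
  exists2 u, G v u & alpha_out G w v = w v u.
Proof.
rewrite /alpha_out; apply: (@big_att _ _ (fun u => G v u) (fun u => w v u)); first exact: max_or.
case: pickP => [j Hj|H]; first by exists j.
by have [u Hu] := Hout v; move: (H u); rewrite Hu.
Qed.

Lemma in_ge (w : 'I_n -> 'I_n -> R) {u v} : G u v -> w u v <= alpha_in G w v.
Proof. by move=> H; rewrite /alpha_in; apply: le_bigmax_cond. Qed.

Lemma out_ge (w : 'I_n -> 'I_n -> R) {u v} : G v u -> w v u <= alpha_out G w v.
Proof. by move=> H; rewrite /alpha_out; apply: le_bigmax_cond. Qed.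

Lemma in_le (w : 'I_n -> 'I_n -> R) v M :
  (forall u, G u v -> w u v <= M) -> alpha_in G w v <= M.
Proof. by move=> H; have [u Gu ->] := in_att w v; apply: H. Qed.

Lemma out_le (w : 'I_n -> 'I_n -> R) v M :
  (forall u, G v u -> w v u <= M) -> alpha_out G w v <= M.
Proof. by move=> H; have [u Gu ->] := out_att w v; apply: H. Qed.

Definition wt (p : 'I_n -> R) : 'I_n -> 'I_n -> R :=
  fun a b => if G a b && (a != b) then alpha a b + (p b - p a) else alpha a b.

Definition inw p v := alpha_in G (wt p) v.
Definition outw p v := alpha_out G (wt p) v.
Definition bal p := forall v, outw p v <= inw p v.

Lemma wt_ne p a b : G a b -> a != b -> wt p a b = alpha a b + (p b - p a).
Proof. by move=> H1 H2; rewrite /wt H1 H2. Qed.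

Lemma wt_eq p a : wt p a a = alpha a a.
Proof. by rewrite /wt eqxx andbF. Qed.

Lemma rho_ge0 (w : 'I_n -> 'I_n -> R) v : 0 <= rhoR G w v.
Proof. by rewrite /rhoR le_max lexx. Qed.

Lemma step (r p : 'I_n -> R) v : (forall u, r u <= p u) -> bal p ->
  r v + rhoR G (wt r) v / 2 <= p v.
Proof.
move=> rp bp; set D := p v - r v.
have D0 : 0 <= D by rewrite /D subr_ge0.
suff: rhoR G (wt r) v <= 2 * D by move=> h; rewrite /D in h *; lra.
rewrite /rhoR ge_max; apply/andP; split; first lra.
suff : outw r v <= inw r v + 2 * D by rewrite /outw /inw; lra.
apply: out_le => w Gvw.
have [/eqP wv|wv] := boolP (w == v).
  subst w; have := in_ge (wt r) Gvw; rewrite -/(inw r v); lra.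
have h1 : wt r v w <= wt p v w + D.
  rewrite !wt_ne // ?(negbT wv) 1?eq_sym //; have := rp w; rewrite /D; lra.
have h2 := out_ge (wt p) Gvw; have h3 := bp v.
have [u Guv hu] := in_att (wt p) v.
have h4 : wt p u v <= inw r v + D.
  have [/eqP uv|uv] := boolP (u == v).
    subst u; rewrite wt_eq -(wt_eq r); have := in_ge (wt r) Guv; rewrite /inw; lra.
  have := in_ge (wt r) Guv; rewrite !wt_ne // /inw /D; have := rp u; lra.
rewrite /outw /inw in h2 h3 h4 *; rewrite hu in h3; lra.
Qed.

Variable s : nat -> 'I_n.
Definition rr t v := raised G s alpha v t.

Lemma raised_S v t : raised G s alpha v t.+1 = raised G s alpha v t +
  (if s t == v then rhoR G (state G s alpha t) v / 2 else 0).
Proof. by rewrite /raised big_mkcond big_ord_recr /= -big_mkcond. Qed.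

Lemma raised0 v : raised G s alpha v 0 = 0.
Proof. by rewrite /raised big_ord0. Qed.

Lemma state_wt t : state G s alpha t = wt (rr t).
Proof.
elim: t => [|t IH].
  apply: funext => a; apply: funext => b.
  by rewrite /wt /rr !raised0 subrr addr0 if_same.
rewrite /= IH; apply: funext => a; apply: funext => b.
rewrite /raise; set d := rhoR G (wt (rr t)) (s t) / 2.
have E : forall v, rr t.+1 v = rr t v + (if s t == v then d else 0).
  by move=> v; rewrite /rr raised_S -/(rr t) IH; case: eqP => // <-.
rewrite /wt !E.
case Gab: (G a b) => //=.
have [/eqP ab|ab] := boolP (a == b).
  by subst b; rewrite /= andbN.
rewrite /= ![s t == _]eq_sym.
have [bv|bv] := eqVneq b (s t); have [av|av] := eqVneq a (s t).
- by move: ab; rewrite av bv eqxx.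
- rewrite /=; lra.
- rewrite /=; lra.
- rewrite /= !addr0 //.
Qed.

Lemma rr_ge0 t v : 0 <= rr t v.
Proof.
rewrite /rr /raised; apply: sumr_ge0 => k _; apply: divr_ge0 => //.
exact: rho_ge0.
Qed.

Lemma rr_le p : bal p -> forall t v, (forall u, 0 <= p u) -> rr t v <= p v.
Proof.
move=> bp t; elim: t => [|t IH] v p0; first by rewrite /rr raised0.
rewrite /rr raised_S state_wt -/(rr t v).
case: eqP => [<-|_]; last by rewrite addr0; apply: IH.
by apply: step => // u; apply: IH.
Qed.


Section Least.
Variable p : 'I_n -> R.
Hypothesis Hp0 : forall v, 0 <= p v.
Hypothesis Hbal : bal p.
Hypothesis Hleast : forall q, (forall v, 0 <= q v) -> bal q -> forall v, p v <= q v.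

Definition low (C : {set 'I_n}) (e : R) : 'I_n -> R :=
  fun v => if v \in C then p v - e else p v.

Lemma wt_low (C : {set 'I_n}) (e : R) a b : wt (low C e) a b = wt p a b +
  (if G a b && (a != b) then (if a \in C then e else 0) - (if b \in C then e else 0) else 0).
Proof.
rewrite /wt /low; case: (G a b && (a != b)); last by rewrite addr0.
by case: (a \in C); case: (b \in C); lra.
Qed.

Lemma lower (C : {set 'I_n}) (e : R) z0 : 0 < e -> z0 \in C -> (forall z, z \in C -> e <= p z) ->
  (forall z, z \in C -> outw (low C e) z <= inw (low C e) z) -> False.
Proof.
move=> e0 z0C ep Hz.
have q0 : forall v, 0 <= low C e v.
  by move=> v; rewrite /low; case: ifP => vC; [have := ep v vC|]; rewrite ?subr_ge0.
have bq : bal (low C e).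
  move=> z; have [zC|zC] := boolP (z \in C); first exact: Hz.
  have h1 : outw (low C e) z <= outw p z.
    apply: out_le => w Gzw; rewrite wt_low Gzw /= (negbTE zC).
    apply: le_trans (out_ge _ Gzw); case: (z != w) => /=; last by rewrite addr0.
    case: (w \in C); lra.
  have h2 : inw p z <= inw (low C e) z.
    rewrite /inw; have [u Guz ->] := in_att (wt p) z.
    apply: le_trans (in_ge _ Guz); rewrite wt_low Guz /= (negbTE zC).
    case: (u != z) => /=; last by rewrite addr0.
    case: (u \in C); lra.
  have := Hbal z; rewrite /outw /inw in h1 h2 *; lra.
have := Hleast _ q0 bq z0; rewrite /low z0C; lra.
Qed.

Lemma tight z : 0 < p z -> inw p z <= outw p z.
Proof.
move=> pz; rewrite leNgt; apply/negP => H.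
pose e := Num.min (p z) ((inw p z - outw p z) / 2).
have e0 : 0 < e by rewrite /e lt_min pz /=; lra.
have e1 : e <= p z by rewrite /e ge_min lexx.
have e2 : e <= (inw p z - outw p z) / 2 by rewrite /e ge_min lexx orbT.
apply: (@lower [set z] e z) => //; first by rewrite inE.
  by move=> z'; rewrite inE => /eqP ->.
move=> z'; rewrite inE => /eqP ->.
have h1 : outw (low [set z] e) z <= outw p z + e.
  apply: out_le => w Gzw; rewrite wt_low Gzw /= [z \in _]inE eqxx.
  have := out_ge (wt p) Gzw; rewrite -/(outw p z).
  case: (z != w) => /=; last by lra.
  by case: (w \in [set z]); lra.
have h2 : inw p z - e <= inw (low [set z] e) z.
  rewrite /inw; have [u Guz ->] := in_att (wt p) z.
  apply: le_trans (in_ge _ Guz); rewrite wt_low Guz /= [z \in _]inE eqxx.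
  case: (u != z) => /=; first by case: (u \in [set z]); lra.
  lra.
rewrite /outw /inw in h1 h2 e2 *; lra.
Qed.

Section Gap.
Variables (U : {set 'I_n}) (Gap : R) (x0 u0 : 'I_n).
Hypothesis HGap : 0 < Gap.
Hypothesis Hx0 : x0 \notin U.
Hypothesis Hu0 : u0 \in U.
Hypothesis HU : forall u x, u \in U -> x \notin U -> p x + Gap <= p u.

Lemma Upos u : u \in U -> Gap <= p u.
Proof. by move=> uU; have := HU u x0 uU Hx0; have := Hp0 x0; lra. Qed.

Lemma Utight u : u \in U -> outw p u = inw p u.
Proof.
move=> uU; apply/eqP; rewrite eq_le Hbal tight //.
by have := Upos _ uU; have := HGap; lra.
Qed.

Definition closedb (C : {set 'I_n}) :=
  [forall x in C, forall w, (G x w && (wt p x w == outw p x)) ==> (w \in C)].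

Lemma crossing ys : ys \in U -> (forall y, y \in U -> inw p y <= inw p ys) ->
  exists x, exists w, [/\ x \in U, w \notin U, G x w & inw p ys <= wt p x w].
Proof.
move=> ysU ysmax; set L := inw p ys.
case: (pselect (exists x, exists w, [/\ x \in U, w \notin U, G x w & L <= wt p x w])) => // nH.
have Hc : forall x w, x \in U -> w \notin U -> G x w -> wt p x w < L.
  move=> x w xU wU Gxw; rewrite ltNge; apply/negP => h; apply: nH.
  by exists x, w.
exfalso.
pose Q := [set y in U | inw p y == L].
have ysQ : ys \in Q by rewrite inE ysU eqxx.
have QU : forall y, y \in Q -> y \in U by move=> y; rewrite inE => /andP[].
have QL : forall y, y \in Q -> inw p y = L by move=> y; rewrite inE => /andP[_ /eqP].
have Qcl : closedb Q.
  apply/forall_inP => x xQ; apply/forallP => w; apply/implyP => /andP[Gxw /eqP wit].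
  have xU := QU _ xQ.
  have hx : outw p x = L by rewrite Utight // QL.
  have wU : w \in U.
    apply/negPn/negP => wU; have := Hc _ _ xU wU Gxw; rewrite wit hx; lra.
  rewrite inE wU /= eq_le ysmax //=.
  by have := in_ge (wt p) Gxw; rewrite -/(inw p w) wit hx.
pose Pk k := [exists C : {set 'I_n}, [&& C \subset Q, closedb C, (0 < #|C|)%N & #|C| == k]].
have exP : exists k, Pk k.
  exists #|Q|; apply/existsP; exists Q; rewrite subxx Qcl eqxx /= andbT.
  by apply/card_gt0P; exists ys.
case: (ex_minnP exP) => m /existsP[C /and4P[CQ Ccl Cne /eqP Cm]] Hmin.
have CU : forall y, y \in C -> y \in U by move=> y yC; apply: QU; exact: (fintype.subsetP CQ y yC).
have CL : forall y, y \in C -> inw p y = L by move=> y yC; apply: QL; exact: (fintype.subsetP CQ y yC).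
have clC : forall x w, x \in C -> G x w -> wt p x w = outw p x -> w \in C.
  move=> x w xC Gxw wit; move/forall_inP: Ccl => /(_ x xC)/forallP/(_ w)/implyP; apply.
  by rewrite Gxw wit eqxx.
have inwit : forall y, y \in C -> exists2 x, x \in C & G x y /\ wt p x y = outw p x.
  move=> y yC; have [w Gyw wit] := out_att (wt p) y.
  have wC : w \in C by apply: (clC y) => //; rewrite -wit.
  have [/eqP wy|wy] := boolP (w == y).
    by subst w; exists y => //; split => //; rewrite /outw wit.
  case: (pselect (exists2 x, x \in C & G x y /\ wt p x y = outw p x)) => // nx.
  exfalso.
  have : Pk #|C :\ y|.
    apply/existsP; exists (C :\ y); rewrite eqxx andbT.
    apply/and3P; split.
    - exact: (fintype.subset_trans (finset.subsetDl C [set y]) CQ).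
    - apply/forall_inP => x; rewrite in_setD1 => /andP[xy xC]; apply/forallP => w'.
      apply/implyP => /andP[Gxw' /eqP wit'].
      rewrite in_setD1 (clC x w') // andbT; apply/eqP => E; subst w'.
      by apply: nx; exists x.
    - by apply/card_gt0P; exists w; rewrite in_setD1 wy wC.
  move/Hmin; rewrite -Cm (cardsD1 y C) yC add1n ltnn //.
have [z0 z0C] : exists z, z \in C by apply/card_gt0P.
have slack : forall pr : 'I_n * 'I_n, ((pr.1 \in C) && (pr.2 \notin C) && G pr.1 pr.2) ->
    0 < outw p pr.1 - wt p pr.1 pr.2.
  move=> [x w] /= /andP[/andP[xC wC] Gxw]; rewrite subr_gt0 lt_neqAle.
  rewrite (out_ge (wt p) Gxw) andbT; apply/eqP => E.
  by move: wC; rewrite (clC x w) // E.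
have [e1 e10 He1] := @exists_pos_below R _ (fun pr : 'I_n * 'I_n => (pr.1 \in C) && (pr.2 \notin C) && G pr.1 pr.2) (fun pr => outw p pr.1 - wt p pr.1 pr.2) slack.
pose e := Num.min Gap e1.
have e0 : 0 < e by rewrite lt_min HGap e10.
have eG : e <= Gap by rewrite ge_min lexx.
have ee1 : e <= e1 by rewrite ge_min lexx orbT.
apply: (@lower C e z0) => //.
  by move=> z zC; apply: le_trans eG (Upos _ (CU _ zC)).
move=> z zC.
have hz : outw p z = L by rewrite Utight ?CL // CU.
apply: (@le_trans _ _ L).
  apply: out_le => w Gzw; rewrite wt_low Gzw /= zC.
  have := out_ge (wt p) Gzw; rewrite -/(outw p z) hz => hw.
  have [/eqP zw|zw] := boolP (z == w); first by subst w; rewrite /= addr0.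
  rewrite /=; case: ifP => wC; first by lra.
  have := He1 (z, w); rewrite /= zC wC Gzw /= => /(_ isT); rewrite hz; lra.
have [x xC [Gxz wit]] := inwit z zC.
apply: le_trans (in_ge _ Gxz); rewrite wt_low Gxz /= xC zC wit Utight ?CL ?CU //.
by case: (x != z) => /=; rewrite ?subrr addr0.
Qed.


Lemma gap_bound : Gap <= \sum_v rhoR G alpha v.
Proof.
have [ys ysU ysmax] := @exists_argmax R _ (fun y => y \in U) (inw p) (ex_intro _ u0 Hu0).
have [x [w [xU wU Gxw Lx]]] := crossing ys ysU ysmax.
set L := inw p ys in Lx.
have xw : x != w by apply/eqP => E; subst w; rewrite xU in wU.
have hxw : L + Gap <= alpha x w.
  by move: Lx; rewrite wt_ne //; have := HU x w xU wU; lra.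
apply: (le_trans (@cover R _ U (fun y => alpha_in G alpha y)
   (fun y => alpha_out G alpha y) L Gap _)).
  move=> th h1 h2.
  pose Y := [pred y | (y \in U) && [exists z, [&& G y z, y != z & th < alpha y z]]].
  have xY : Y x.
    rewrite /= xU /=; apply/existsP; exists w; rewrite Gxw xw /=; lra.
  have [y yY ymax] := @exists_argmax R _ Y p (ex_intro _ x xY).
  move/andP: (yY) => [yU /existsP[z /and3P[Gyz yz thz]]].
  exists y => //; apply/andP; split; last first.
    by apply: lt_le_trans thz (out_ge alpha Gyz).
  apply: in_le => u Guy.
  have hy := ysmax y yU; rewrite -/L in hy.
  have [/eqP uy|uy] := boolP (u == y).
    subst u; have := in_ge (wt p) Guy; rewrite wt_eq -/(inw p y); lra.
  rewrite leNgt; apply/negP => hu.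
  have := in_ge (wt p) Guy; rewrite wt_ne // -/(inw p y) => hw.
  have pu : p y < p u by lra.
  have uU : u \in U.
    apply/negPn/negP => uU; have := HU y u yU uU; have := HGap; lra.
  have uY : Y u.
    rewrite /= uU /=; apply/existsP; exists y; rewrite Guy uy /=; lra.
  by have := ymax u uY; lra.
rewrite /rhoR [X in _ <= X](bigID (fun y => y \in U)) /=.
rewrite -[X in X <= _]addr0 lerD // sumr_ge0 // => i _.
by rewrite le_max lexx.
Qed.

End Gap.

Lemma range a b : p b - p a <= (n.-1)%:R * \sum_v rhoR G alpha v.
Proof.
set S := \sum_v rhoR G alpha v.
have S0 : 0 <= S by apply: sumr_ge0 => v _; exact: rho_ge0.
have [vm _ vmin] := @exists_argmin R _ predT p (ex_intro _ a isT).
set m := p vm.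
pose B k := [set v | p v <= m + k%:R * S].
have Bmono : forall k v, v \in B k -> v \in B k.+1.
  move=> k v; rewrite !inE => h; apply: (le_trans h).
  by rewrite lerD2l ler_wpM2r // ler_nat.
have claim : forall k, (k < #|B k|)%N \/ (forall v, v \in B k).
  elim=> [|k IH].
    left; apply/card_gt0P; exists vm; rewrite inE mul0r addr0.
    by rewrite /m lexx.
  case: (pselect (forall v, v \in B k)) => [all|nall].
    by right => v; apply: Bmono.
  have Hk : (k < #|B k|)%N by case: IH.
  have [v0 v0B] : exists v, v \notin B k.
    case: (pselect (exists v, v \notin B k)) => // nx; exfalso; apply: nall => v.
    by apply/negPn/negP => h; apply: nx; exists v.
  have [u0 u0U u0min] := @exists_argmin R _ (fun v => v \notin B k) p (ex_intro _ v0 v0B).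
  have vmB : vm \in B k.
    by rewrite inE /m lerDl mulr_ge0 // ler0n.
  have [x0 x0B x0max] := @exists_argmax R _ (fun v => v \in B k) p (ex_intro _ vm vmB).
  have Hgap : 0 < p u0 - p x0.
    move: u0U x0B; rewrite !inE -ltNge => h1 h2; lra.
  have HU : forall u x, u \in ~: B k -> x \notin ~: B k -> p x + (p u0 - p x0) <= p u.
    move=> u x; rewrite !finset.in_setC negbK => uU xB.
    have := x0max x xB; have := u0min u uU; lra.
  have := @gap_bound (~: B k) (p u0 - p x0) x0 u0 Hgap.
  rewrite !finset.in_setC negbK x0B u0U => /(_ isT isT HU) hg.
  have u0B : u0 \in B k.+1.
    move: hg x0B; rewrite -/S => hg; rewrite !inE -natr1 mulrDl mul1r => h; lra.
  left; apply: (@leq_trans #|u0 |: B k|).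
    by rewrite cardsU1 u0U add1n ltnS.
  apply: subset_leq_card; apply/fintype.subsetP => v; rewrite in_setU1.
  by case/orP => [/eqP ->|]; [exact: u0B | exact: Bmono].
have allB : forall v, v \in B n.-1.
  case: (claim n.-1) => // h v; apply/negPn/negP => vB.
  have : (0 < #|~: B n.-1|)%N by apply/card_gt0P; exists v; rewrite inE.
  have := cardsCs (B n.-1); rewrite card_ord => e.
  move: h; rewrite e.
  have : (#|~: B n.-1| <= n)%N.
    by rewrite -[X in (_ <= X)%N](card_ord n); apply: max_card.
  move: (#|~: B n.-1|) => c; lia.
have := allB b; rewrite inE => hb.
have := vmin a isT; rewrite -/m; lra.
Qed.

End Least.


Lemma lip (f g : 'I_n -> R) (e : R) v : (forall u, f u <= g u + e) ->
  (forall u, g u <= f u + e) ->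
  outw f v - inw f v <= outw g v - inw g v + 4 * e.
Proof.
move=> h1 h2.
have ho : outw f v <= outw g v + 2 * e.
  apply: out_le => w Gvw; have := out_ge (wt g) Gvw; rewrite -/(outw g v).
  rewrite /wt Gvw /=; case: (v != w) => /=; have := h1 w; have := h2 v;
  have := h1 v; have := h2 w; lra.
have hi : inw g v <= inw f v + 2 * e.
  rewrite /inw; have [u Guv ->] := in_att (wt g) v.
  apply: (@le_trans _ _ (wt f u v + 2 * e)); last by rewrite lerD2r in_ge.
  rewrite /wt Guv /=; case: (u != v) => /=; have := h1 u; have := h2 v;
  have := h1 v; have := h2 u; lra.
lra.
Qed.

Local Open Scope classical_set_scope.
Section Limit.
Variable rs : 'I_n -> R.
Hypothesis Hfair : fair s.
Hypothesis Hcv : forall v, (fun t => raised G s alpha v t) @ \oo --> rs v.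

Lemma rs_ge0 v : 0 <= rs v.
Proof.
apply: (@closed_cvg nat R \oo _ (fun t => raised G s alpha v t) [set x | 0 <= x] (@closed_ge R 0) _ (rs v) (Hcv v)).
by apply: nearW => t; apply: rr_ge0.
Qed.

Lemma rs_le q : bal q -> (forall u, 0 <= q u) -> forall v, rs v <= q v.
Proof.
move=> bq q0 v.
apply: (@closed_cvg nat R \oo _ (fun t => raised G s alpha v t) [set x | x <= q v] (@closed_le R (q v)) _ (rs v) (Hcv v)).
by apply: nearW => t; apply: rr_le.
Qed.

Lemma rs_bal : bal rs.
Proof.
move=> v; apply/ler_addgt0Pr => e e0.
pose d := e / 8.
have d0 : 0 < d by rewrite /d divr_gt0.
have H : \forall t \near \oo, forall u, `|rs u - raised G s alpha u t| < d.
  apply: filter_forall => u; move: (Hcv u) => /cvgrPdist_lt /(_ d d0).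
  by [].
have [N _ HN] := H.
have [k [Nk skv]] := Hfair v N.
have h1 := HN k Nk; have h2 := HN k.+1 (leqW Nk).
have hr := raised_S v k; rewrite skv eqxx state_wt in hr.
have hrho : rhoR G (wt (rr k)) v < 4 * d.
  have := h1 v; have := h2 v; rewrite hr !ltr_norml /rr; lra.
have hl := @lip rs (rr k) d v.
have hle : outw (rr k) v - inw (rr k) v <= rhoR G (wt (rr k)) v.
  by rewrite /rhoR le_max lexx orbT.
suff : outw rs v - inw rs v <= outw (rr k) v - inw (rr k) v + 4 * d.
  have de : d = e / 8 by []; lra.
apply: hl => u; have := h1 u; rewrite ltr_norml /rr; lra.
Qed.

End Limit.

End Main.

Local Open Scope classical_set_scope.

Theorem proposition3 (R : realType) (n : nat) (G : rel 'I_n)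
  (alpha : 'I_n -> 'I_n -> R) (s : nat -> 'I_n) (rstar : 'I_n -> R) :
  strongly_connected G -> fair s ->
  (forall v : 'I_n, (fun t : nat => raised G s alpha v t) @ \oo --> rstar v) ->
  let y := fun v => - rstar v in
  fmax y - fmin y <= (n%:R - 1) * \sum_(v : 'I_n) rhoR G alpha v.
Proof.
move=> Hsc Hfair Hcv /=.
set S := \sum_(v : 'I_n) rhoR G alpha v.
have key : forall a b : 'I_n, rstar b - rstar a <= (n%:R - 1) * S.
  move=> a b; have [n1|n1] := leqP n 1.
    have ab : a = b by apply: ord_inj; have := ltn_ord a; have := ltn_ord b; lia.
    subst b; rewrite subrr; have -> : n = 1%N by have := ltn_ord a; lia.
    by rewrite subrr mul0r.
  have other : forall v : 'I_n, exists2 u : 'I_n, u != v & True.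
    move=> v; have [v0|v0] := eqVneq (val v) 0%N.
      exists (Ordinal n1) => //; apply/eqP => E; move: v0; rewrite -E /=; lia.
    by exists (Ordinal (ltn_trans (ltnSn 0) n1)) => //; apply/eqP => E; move: v0; rewrite -E.
  have Hin : forall v, exists u, G u v.
    move=> v; have [u uv _] := other v; have /connectP[p Hp Hl] := Hsc u v.
    case/lastP: p Hp Hl => [_ /= E|p z]; first by rewrite E eqxx in uv.
    rewrite last_rcons rcons_path => /andP[_ Hz] E; subst z.
    by exists (last u p).
  have Hout : forall v, exists w, G v w.
    move=> v; have [u uv _] := other v; have /connectP[p Hp Hl] := Hsc v u.
    case: p Hp Hl => [_ /= E|z p]; first by rewrite E eqxx in uv.
    by move=> /= /andP[Gz _] _; exists z.
  have := @range R n G alpha Hin Hout rstar (@rs_ge0 R n G alpha s rstar Hcv)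
    (@rs_bal R n G alpha Hin Hout s rstar Hfair Hcv)
    (fun q q0 bq v => @rs_le _ _ _ _ Hin Hout _ _ Hcv q bq q0 v) a b.
  by rewrite -/S -subn1 natrB // ltnW.
rewrite /fmax /fmin; case: pickP => [x0 _|none]; last first.
  rewrite subrr /S big1 ?mulr0 // => i _; by have := none i.
have [a _ ->] := @big_att R _ predT (fun v => - rstar v) Num.max (- rstar x0) (@max_or R) (ex_intro2 _ _ x0 isT erefl).
have [b _ ->] := @big_att R _ predT (fun v => - rstar v) Num.min (- rstar x0) (@min_or R) (ex_intro2 _ _ x0 isT erefl).
by rewrite /= opprK addrC; apply: key.
Qed.
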